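(* Let $p$ be any prime, let $m,k$ be positive integers, let $q=p^m$, and let $U_{q+1}=\{x\in\mathbb{F}_{q^2}: x^{q+1}=1\}$. Then for any $a,b\in\mathbb{F}_{q^2}$ with $(a,b)\neq(0,0)$, the number of solutions $x\in U_{q+1}$ of the equation \[ b x^{p^k+1}+a x^{p^k}+a^{q}x+b^{q}=0 \] is one of $0$, $1$, $2$, or $p^{\gcd(k,m)}+1$. *)

(* Defs.v *)
(* F_{q^2} is modelled as an arbitrary finite field F with
   #|F| = q^2, q = p^m (unique up to isomorphism). *)
From mathcomp Require Import all_boot all_order all_algebra all_field.
Set Implicit Arguments. Unset Strict Implicit. Unset Printing Implicit Defensive.
Import GRing.Theory.
Local Open Scope ring_scope.

Definition unit_circle (F : finFieldType) (q : nat) : {set F} :=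
  [set x : F | x ^+ (q + 1) == 1].

Definition sol_set (F : finFieldType) (p k q : nat) (a b : F) : {set F} :=
  [set x in unit_circle F q |
     b * x ^+ (p ^ k + 1) + a * x ^+ (p ^ k) + a ^+ q * x + b ^+ q == 0].

(* Main.v *)
Require Import Defs.
From mathcomp Require Import all_boot all_order all_algebra all_field all_solvable.
From mathcomp Require Import ring.
Set Implicit Arguments. Unset Strict Implicit. Unset Printing Implicit Defensive.
Import GRing.Theory.
Local Open Scope ring_scope.

Lemma card_unity (F : finFieldType) (n : nat) :
  (0 < n)%N -> (n %| #|F|.-1)%N -> #|[set s : F | s ^+ n == 1]| = n.
Proof.
move=> n0 dn.
set N := #|F|.-1.
have N0 : (0 < N)%N by rewrite /N -ltnS prednK ?finNzRing_gt1 // ltnW ?finNzRing_gt1.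
have FN : #|F| = N.+1 by rewrite /N prednK // ltnW ?finNzRing_gt1.
have [g prim_g] : {g : F | N.-primitive_root g}.
  pose rs := enum [set x : F | x != 0].
  have : has N.-primitive_root rs.
    apply: has_prim_root => //.
    - apply/allP => x; rewrite mem_enum inE => x0.
      rewrite unity_rootE; apply/eqP.
      have := expf_card x; rewrite FN exprS => h.
      by apply: (mulfI x0); rewrite h mulr1.
    - exact: enum_uniq.
    - rewrite -cardE.
      have -> : [set x : F | x != 0] = [set~ 0] by apply/setP => x; rewrite !inE.
      by rewrite cardsC1 FN.
  by move/hasP/sig2_eqW => [g _ pg]; exists g.
have prim_z := dvdn_prim_root prim_g dn.
set z := g ^+ (N %/ n) in prim_z.
have -> : [set s : F | s ^+ n == 1] = [set z ^+ (val i) | i : 'I_n].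
  apply/setP => s; rewrite inE; apply/eqP/imsetP.
  - by move/(prim_rootP prim_z) => [i ->]; exists i.
  - move=> [i _ ->]; by rewrite -exprM mulnC exprM (prim_expr_order prim_z) expr1n.
rewrite card_imset ?card_ord // => i j /eqP.
rewrite (eq_prim_root_expr prim_z) !modn_small ?ltn_ord // => /eqP.
exact: val_inj.
Qed.

Lemma card_fix (F : finFieldType) (n : nat) :
  (0 < n)%N -> (n %| #|F|.-1)%N -> #|[set s : F | s ^+ n.+1 == s]| = n.+1.
Proof.
move=> n0 dn.
have -> : [set s : F | s ^+ n.+1 == s] = 0 |: [set s : F | s ^+ n == 1].
  apply/setP => s; rewrite !inE exprS.
  have [->|s0] := eqVneq s 0; first by rewrite mul0r eqxx.
  apply/eqP/eqP => [h|->]; last by rewrite mulr1.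
  by apply: (mulfI s0); rewrite h mulr1.
rewrite cardsU1 card_unity // inE expr0n gtn_eqF // eq_sym oner_eq0.
by rewrite add1n.
Qed.

Lemma frobD (F : finFieldType) (p n : nat) (x y : F) : p \in [pchar F] ->
  (x + y) ^+ (p ^ n) = x ^+ (p ^ n) + y ^+ (p ^ n).
Proof.
move=> hp; apply: exprDn_pchar.
rewrite (eq_pnat _ (pcharf_eq hp)) pnatX pnat_id ?orTb //.
exact: pcharf_prime hp.
Qed.

Lemma frobB (F : finFieldType) (p n : nat) (x y : F) : p \in [pchar F] ->
  (x - y) ^+ (p ^ n) = x ^+ (p ^ n) - y ^+ (p ^ n).
Proof.
move=> hp; apply/eqP; rewrite eq_sym subr_eq -frobD // subrK //.
Qed.

Lemma fix_mul (F : finFieldType) (p a j : nat) (s : F) :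
  s ^+ (p ^ a) = s -> s ^+ (p ^ (a * j)) = s.
Proof.
move=> h; elim: j => [|j IH]; first by rewrite muln0 expn0 expr1.
by rewrite mulnS expnD exprM h IH.
Qed.

Lemma fix_gcd (F : finFieldType) (p k m : nat) (s : F) : (0 < k)%N ->
  s ^+ (p ^ k) = s -> s ^+ (p ^ m) = s -> s ^+ (p ^ gcdn k m) = s.
Proof.
move=> k0 hk hm; case: (egcdnP m k0) => km kn E _.
have h1 := fix_mul km hk; rewrite mulnC E expnD mulnC exprM in h1.
rewrite -exprM mulnC exprM (mulnC kn m) (fix_mul kn hm) in h1; exact: h1.
Qed.

Lemma fix_dvd (F : finFieldType) (p d a : nat) (s : F) : (d %| a)%N ->
  s ^+ (p ^ d) = s -> s ^+ (p ^ a) = s.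
Proof. by move=> /dvdnP[j ->] h; rewrite mulnC fix_mul. Qed.

Lemma dvd_pow_sub1 (x j : nat) : (x - 1 %| x ^ j - 1)%N.
Proof.
case: x => [|x]; first by rewrite sub0n dvd0n; case: j => [|j]; rewrite ?expn0 ?exp0n.
rewrite subn1 /= -eqn_mod_dvd ?expn_gt0 //.
rewrite -modnXm.
have -> : (x.+1 %% x = 1 %% x)%N by rewrite -addn1 modnDl.
by rewrite modnXm exp1n.
Qed.

Definition H (F : fieldType) (c1 c2 c3 : F) (e : nat) (z : F) :=
  c1 * z ^+ e + c2 * z + c3.

Lemma H_sub (F : finFieldType) (p n : nat) (c1 c2 c3 z z1 : F) :
  p \in [pchar F] ->
  H c1 c2 c3 (p ^ n) z - H c1 c2 c3 (p ^ n) z1 =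
  c1 * (z - z1) ^+ (p ^ n) + c2 * (z - z1).
Proof. by move=> hp; rewrite /H frobB //; ring. Qed.

Lemma H_comb (F : finFieldType) (p n : nat) (c1 c2 c3 z1 z2 s : F) :
  p \in [pchar F] -> s ^+ (p ^ n) = s ->
  H c1 c2 c3 (p ^ n) (z1 + (z2 - z1) * s) =
  H c1 c2 c3 (p ^ n) z1 + s * (H c1 c2 c3 (p ^ n) z2 - H c1 c2 c3 (p ^ n) z1).
Proof.
move=> hp hs; rewrite H_sub // /H (frobD _ z1) // exprMn hs; ring.
Qed.

Lemma ratio_fix (F : fieldType) (e : nat) (c1 c2 w w1 : F) :
  w1 != 0 -> c2 != 0 -> c1 * w ^+ e + c2 * w = 0 ->
  c1 * w1 ^+ e + c2 * w1 = 0 -> (w / w1) ^+ e = w / w1.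
Proof.
move=> w10 c20 hw hw1.
have c10 : c1 != 0.
  apply/eqP => c10; move: hw1; rewrite c10 mul0r add0r => /eqP.
  by rewrite mulf_eq0 (negbTE c20) (negbTE w10).
have e1 : w ^+ e = - (c2 * w) / c1.
  have h' : c1 * w ^+ e = - (c2 * w) by apply/eqP; rewrite -subr_eq0 opprK hw.
  by rewrite -h' mulrC mulKf.
have e2 : w1 ^+ e = - (c2 * w1) / c1.
  have h' : c1 * w1 ^+ e = - (c2 * w1) by apply/eqP; rewrite -subr_eq0 opprK hw1.
  by rewrite -h' mulrC mulKf.
rewrite exprMn exprVn e1 e2; field.
by rewrite w10 c10 oppr_eq0 mulf_neq0.
Qed.

Lemma key (F : fieldType) (Q : nat) (al be b y z : F) : y * z = 1 ->
  be * z ^+ Q + al * z + b = z ^+ Q * z * (b * y ^+ Q * y + al * y ^+ Q + be * y).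
Proof.
move=> hyz.
have hYZ : y ^+ Q * z ^+ Q = 1 by rewrite -exprMn hyz expr1n.
have -> : z ^+ Q * z * (b * y ^+ Q * y + al * y ^+ Q + be * y) =
  b * (y ^+ Q * z ^+ Q) * (y * z) + al * (y ^+ Q * z ^+ Q) * z + be * z ^+ Q * (y * z) by ring.
rewrite hYZ hyz; ring.
Qed.

Unset Implicit Arguments.
Set Strict Implicit.

Theorem lemma2p5 (p m k : nat) (F : finFieldType) (a b : F) :
  prime p -> (0 < m)%N -> (0 < k)%N ->
  #|F| = ((p ^ m) ^ 2)%N ->
  (a, b) != (0, 0) ->
  #|sol_set p k (p ^ m) a b| \in [:: 0%N; 1%N; 2%N; (p ^ gcdn k m).+1].
Proof.
move=> pp m0 k0 cardF ab0.
have hp : p \in [pchar F].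
  by apply: (@card_finPcharP _ p (m * 2)); rewrite // cardF -expnM.
have q0 : (0 < p ^ m)%N by rewrite expn_gt0 prime_gt0.
have Uinv : forall x : F, x \in unit_circle F (p ^ m) -> x != 0 /\ x ^+ (p ^ m) = x^-1.
  move=> x; rewrite inE addn1 exprSr => /eqP h.
  have x0 : x != 0.
    by apply/eqP => x0; move: h; rewrite x0 mulr0 => /eqP; rewrite eq_sym oner_eq0.
  by split => //; rewrite -[x ^+ _]mulr1 -(mulfV x0) mulrA h mul1r.
have [S0|[x0 x0S]] := set_0Vmem (sol_set p k (p ^ m) a b).
  by rewrite S0 cards0.
move: (x0S); rewrite inE => /andP [x0U /eqP fx0].
have [x00 x0q] := Uinv _ x0U.
pose f (x : F) := b * x ^+ (p ^ k + 1) + a * x ^+ (p ^ k) + a ^+ (p ^ m) * x + b ^+ (p ^ m).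
have fx01 : f x0 = 0 := fx0.
pose al := b * x0 + a.
pose be := b * x0 ^+ (p ^ k) + a ^+ (p ^ m).
have fid : forall y, f (x0 + y) = f x0 + (b * y ^+ (p ^ k) * y + al * y ^+ (p ^ k) + be * y).
  move=> y; rewrite /f !addn1 !exprSr (frobD _ x0) // /al /be; ring.
pose Z := [set z : F | (H 1 (x0 ^+ 2) x0 (p ^ m) z == 0) && (H be al b (p ^ k) z == 0)].
have Zne0 : forall z, z \in Z -> z != 0.
  move=> z; rewrite inE => /andP [/eqP hE _]; apply/eqP => z0.
  move: hE; rewrite z0 /H expr0n gtn_eqF // !mulr0 !add0r => h; by rewrite h eqxx in x00.
have cS : #|sol_set p k (p ^ m) a b| = (#|Z|).+1.
  have -> : sol_set p k (p ^ m) a b = x0 |: [set x0 + z^-1 | z in Z].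
    apply/setP => x; rewrite in_setU1; apply/idP/idP.
    - move=> xS; have [exx|xx0] := eqVneq x x0. { by rewrite exx. }
      apply/orP; right; apply/imsetP; exists (x - x0)^-1; last by rewrite invrK addrC subrK.
      move: xS; rewrite inE => /andP [xU /eqP fx].
      have [xn0 xq] := Uinv _ xU.
      have yn0 : x - x0 != 0 by rewrite subr_eq0.
      rewrite inE; apply/andP; split; apply/eqP.
      + rewrite /H exprVn frobB // xq x0q; field.
        by rewrite yn0 x00 xn0 mulN1r subr_eq0 eq_sym -subr_eq0 yn0.
      + rewrite /H (@key _ _ al be b (x - x0)) ?mulfV //.
        have := fid (x - x0); rewrite addrC subrK -/(f x) -/(f x0).
        have fx1 : f x = 0 := fx.
        by rewrite fx1 fx01 add0r => <-; rewrite mulr0.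
    - case/orP => [/eqP -> // | /imsetP [z zZ ->]].
      have z0 := Zne0 _ zZ.
      move: zZ; rewrite inE => /andP [/eqP hE /eqP hG].
      have zq : z ^+ (p ^ m) = - (x0 ^+ 2 * z + x0).
        by move/eqP: hE; rewrite /H mul1r -addrA addr_eq0 => /eqP.
      have x0z : x0 * z + 1 != 0.
        apply: contra z0 => /eqP h.
        have : z ^+ (p ^ m) = 0.
          rewrite zq (_ : x0 ^+ 2 * z + x0 = x0 * (x0 * z + 1)); last by ring.
          by rewrite h mulr0 oppr0.
        by move/eqP; rewrite expf_eq0 q0.
      rewrite inE; apply/andP; split.
      + rewrite inE addn1 exprSr frobD // exprVn zq x0q; apply/eqP; field.
        have hx : x0 ^+ 2 * z + x0 = x0 * (x0 * z + 1) by ring.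
        by rewrite z0 x00 oppr_eq0 hx mulf_neq0.
      + apply/eqP.
        rewrite /H (@key _ _ al be b z^-1 z) ?mulVf // in hG.
        have T0 : b * z^-1 ^+ (p ^ k) * z^-1 + al * z^-1 ^+ (p ^ k) + be * z^-1 = 0.
          move/eqP: hG; rewrite !mulf_eq0 expf_eq0 (negbTE z0) andbF /=.
          by move/eqP.
        have := fid z^-1; rewrite fx01 T0 addr0; exact.
  rewrite cardsU1 card_imset; last first.
    by move=> z1 z2 /= /addrI /invr_inj.
  suff -> : x0 \notin [set x0 + z^-1 | z in Z] by [].
  apply/imsetP => [[z zZ /eqP]]; rewrite -{1}[x0]addr0 (inj_eq (addrI x0)) eq_sym invr_eq0.
  by rewrite (negbTE (Zne0 _ zZ)).

have d0 : (0 < gcdn k m)%N by rewrite gcdn_gt0 k0.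
have hx02 : x0 ^+ 2 != 0 by rewrite expf_neq0.
rewrite cS.
have [le1|gt1] := leqP #|Z| 1.
  by move: le1; case: #|Z| => [|[|]].
have [z1 [z2 [z1Z z2Z z12]]] := card_gt1P gt1.
move: (z1Z) (z2Z); rewrite !inE => /andP [/eqP hE1 /eqP hG1] /andP [/eqP hE2 /eqP hG2].
pose w := z2 - z1.
have w0 : w != 0 by rewrite subr_eq0 eq_sym.
have eG : be * w ^+ (p ^ k) + al * w = 0.
  by have := @H_sub F p k be al b z2 z1 hp; rewrite hG2 hG1 subrr => <-.
have eE : 1 * w ^+ (p ^ m) + x0 ^+ 2 * w = 0.
  by have := @H_sub F p m 1 (x0 ^+ 2) x0 z2 z1 hp; rewrite hE2 hE1 subrr => <-.
have al0 : al != 0.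
  apply/eqP => al0.
  move: eG; rewrite al0 mul0r addr0 => /eqP; rewrite mulf_eq0 expf_eq0 (negbTE w0) andbF orbF.
  move=> /eqP be0.
  move: hG1; rewrite /H be0 al0 !mul0r !add0r => b0.
  have a0 : a = 0 by move: al0; rewrite /al b0 mul0r add0r.
  by rewrite a0 b0 eqxx in ab0.
have -> : Z = [set z1 + w * s | s in [set s : F | s ^+ (p ^ gcdn k m) == s]].
  apply/setP => z; apply/idP/imsetP.
  - move=> zZ; move: (zZ); rewrite inE => /andP [/eqP hE /eqP hG].
    exists ((z - z1) / w); last by rewrite mulrC divfK // addrC subrK.
    rewrite inE; apply/eqP; apply: fix_gcd => //.
    + apply: (@ratio_fix _ _ be al) => //.
      by have := @H_sub F p k be al b z z1 hp; rewrite hG hG1 subrr => <-.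
    + apply: (@ratio_fix _ _ 1 (x0 ^+ 2)) => //.
      by have := @H_sub F p m 1 (x0 ^+ 2) x0 z z1 hp; rewrite hE hE1 subrr => <-.
  - move=> [s sD ->]; move: sD; rewrite inE => /eqP hs.
    have hsk := fix_dvd (dvdn_gcdl k m) hs.
    have hsm := fix_dvd (dvdn_gcdr k m) hs.
    rewrite inE /w (H_comb _ _ _ _ _ hp hsm) (H_comb _ _ _ _ _ hp hsk).
    by rewrite hE1 hE2 hG1 hG2 subrr mulr0 addr0 eqxx.
rewrite card_imset; last by move=> s1 s2 /= /addrI /(mulfI w0).
have p1 : (1 < p ^ gcdn k m)%N by rewrite -(exp1n (gcdn k m)) ltn_exp2r // prime_gt1.
have cD : #|[set s : F | s ^+ (p ^ gcdn k m) == s]| = (p ^ gcdn k m)%N.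
  have h1 : (0 < (p ^ gcdn k m).-1)%N by rewrite -ltnS prednK ?(ltnW p1).
  have h2 : ((p ^ gcdn k m).-1 %| #|F|.-1)%N.
    rewrite cardF -!subn1 -expnM.
    have /dvdnP [j ->] : (gcdn k m %| m * 2)%N by apply: dvdn_mulr; exact: dvdn_gcdr.
    by rewrite mulnC expnM dvd_pow_sub1.
  by have := card_fix h1 h2; rewrite prednK // ltnW.
by rewrite cD eqxx !orbT.
Qed.
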